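(* Let $G=(V,E)$ be a connected graph, let $(C,+)$ be an Abelian group, let $c\colon V\to C$ be a distinguishing vertex colouring, and let $c'$ be the canonical edge colouring $c'(uv)=c(u)+c(v)$. Let $\Gamma=\{\gamma\in\operatorname{Aut} G : c'\circ\gamma=c'\}$ be the stabiliser of $c'$. Then $|\Gamma|\le |C|$.
   Context: Graphs are simple and may be infinite. Automorphisms act on edges by $\gamma(uv)=\gamma(u)\gamma(v)$. A vertex colouring $c$ is distinguishing if the identity is the only automorphism $\gamma$ with $c\circ\gamma=c$. *)

(* Defs.v *)
From HB Require Import structures.
From mathcomp Require Import all_boot all_order all_algebra.
From Stdlib Require Import Relations.
Set Implicit Arguments. Unset Strict Implicit. Unset Printing Implicit Defensive.
Import GRing.Theory.
Local Open Scope ring_scope.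

Definition simple_graph (V : Type) (adj : V -> V -> Prop) : Prop :=
  (forall u v, adj u v -> adj v u) /\ (forall v, ~ adj v v).

Definition connected (V : Type) (adj : V -> V -> Prop) : Prop :=
  forall u v, clos_refl_trans V adj u v.

Definition is_aut (V : Type) (adj : V -> V -> Prop) (g : V -> V) : Prop :=
  bijective g /\ (forall u v, adj u v <-> adj (g u) (g v)).

Definition distinguishing (V T : Type) (adj : V -> V -> Prop) (c : V -> T) : Prop :=
  forall g, is_aut adj g -> (forall v, c (g v) = c v) -> forall v, g v = v.

(* Canonical edge colouring c'(uv) = c(u) + c(v) (symmetric, so well defined on edges). *)
Definition canon_edge_col (V : Type) (C : zmodType) (c : V -> C) (u v : V) : C :=
  c u + c v.

(* gamma lies in the stabiliser of c': an automorphism with c' o gamma = c' on every edge,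
   where gamma(uv) = gamma(u)gamma(v). *)
Definition in_edge_stab (V : Type) (C : zmodType) (adj : V -> V -> Prop) (c : V -> C)
    (g : V -> V) : Prop :=
  is_aut adj g /\
  (forall u v, adj u v -> canon_edge_col c (g u) (g v) = canon_edge_col c u v).

(* Main.v *)
Require Import Defs.
From HB Require Import structures.
From mathcomp Require Import all_boot all_order all_algebra.
From Stdlib Require Import Relations Classical.
Set Implicit Arguments.
Import GRing.Theory.
Local Open Scope ring_scope.

Lemma edge_d (V : Type) (adj : V -> V -> Prop) (C : zmodType) (c : V -> C) g u v :
  in_edge_stab adj c g -> adj u v -> c (g u) - c u = - (c (g v) - c v).
Proof.
move=> [_ H] Huv; have := H u v Huv; rewrite /canon_edge_col => E.
apply/eqP; rewrite -subr_eq0 opprK.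
have -> : c (g u) - c u + (c (g v) - c v) = (c (g u) + c (g v)) - (c u + c v).
  by rewrite opprD !addrA; congr (_ + _); rewrite -!addrA; congr (_ + _); rewrite addrC.
by rewrite E subrr.
Qed.

Theorem mainTheorem5 (V : Type) (adj : V -> V -> Prop) (C : zmodType) (c : V -> C) :
  simple_graph adj -> connected adj -> distinguishing adj c ->
  exists f : (V -> V) -> C,
    forall g1 g2, in_edge_stab adj c g1 -> in_edge_stab adj c g2 ->
      f g1 = f g2 -> forall v, g1 v = g2 v.
Proof.
move=> Hs Hc Hd.
case: (classic (inhabited V)) => [[v0]|nI]; last first.
  by exists (fun _ => 0) => g1 g2 _ _ _ v; exfalso; apply: nI; constructor.
exists (fun g => c (g v0)) => g1 g2 S1 S2 E.
have key : forall x y, clos_refl_trans V adj x y ->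
  (c (g1 x) - c x = c (g2 x) - c x <-> c (g1 y) - c y = c (g2 y) - c y).
  move=> x y; elim => [a b Hab| a | a b d _ IH1 _ IH2].
  - rewrite (@edge_d _ _ _ _ g1 a b S1 Hab) (@edge_d _ _ _ _ g2 a b S2 Hab); split; [exact: oppr_inj | by move->].
  - by [].
  - by rewrite IH1 IH2.
have Ec : forall v, c (g1 v) = c (g2 v).
  move=> v; have := proj1 (key v0 v (Hc v0 v)); rewrite E => /(_ erefl) /eqP.
  by rewrite (can_eq (addrK _)) => /eqP.
case: S1 => [[B1 H1] _]; case: S2 => [[B2 H2] _].
case: B2 => h2 K2 K2'.
have Hk : is_aut adj (fun x => g1 (h2 x)).
  case: B1 => h1 K1 K1'; split.
    by exists (fun x => g2 (h1 x)) => x /=; rewrite ?K1 ?K2' ?K1' ?K2.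
  move=> u v; rewrite -H1; split.
    by move=> Huv; apply/H2; rewrite !K2'.
  by move/H2; rewrite !K2'.
have Hid := Hd _ Hk (fun x => etrans (Ec _) (f_equal c (K2' x))).
by move=> v; rewrite -{1}(K2 v) Hid.
Qed.
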